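(* Let $f\colon X\to Y$ be a standard proper map between standard coarse spaces, where $X$ is non-empty and $Y$ is connected. If ${}^*f\colon\partial_SX\to\partial_SY$ is coarsely surjective, then $f$ is coarsely surjective.
   Context: Nonstandard framework with transfer and sufficient saturation. Coarse structure $\mathcal{C}_X$: family of subsets of $X\times X$ containing the diagonal, closed under subsets, finite unions, inverses, compositions; connected if every singleton $\{(x,y)\}$ is controlled. Induced prebornology $\mathcal{B}_X=\{B:B\times B\in\mathcal{C}_X\}$; proper map: preimages of bounded sets are bounded. $\mathrm{INF}(X)={}^*X\setminus\bigcup_{B\in\mathcal{B}_X}{}^*B$; $\partial_SX$ is $\mathrm{INF}(X)$ with coarse structure $\{E\subseteq\mathrm{INF}(X)^2:E\subseteq{}^*F,\ F\in\mathcal{C}_X\}$. A map $g\colon Z\to W$ of coarse spaces is coarsely surjective if $E[g(Z)]=W$ for some controlled $E$ of $W$ (here ${}^*f$ is regarded as a map $\partial_SX\to\partial_SY$, assuming it maps $\mathrm{INF}(X)$ into $\mathrm{INF}(Y)$). *)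

(* Defs.v *)
From Stdlib Require Import List.
Set Implicit Arguments.

Definition rel (T : Type) := T -> T -> Prop.

Record is_coarse_structure (X : Type) (C : rel X -> Prop) : Prop := {
  cs_diag  : C (fun x y => x = y);
  cs_sub   : forall E E', C E -> (forall x y, E' x y -> E x y) -> C E';
  cs_union : forall E1 E2, C E1 -> C E2 -> C (fun x y => E1 x y \/ E2 x y);
  cs_inv   : forall E, C E -> C (fun x y => E y x);
  cs_comp  : forall E1 E2, C E1 -> C E2 ->
               C (fun x z => exists y, E1 x y /\ E2 y z)
}.

Definition coarse_connected (X : Type) (C : rel X -> Prop) : Prop :=
  forall x y : X, C (fun a b => a = x /\ b = y).

Definition bounded (X : Type) (C : rel X -> Prop) (B : X -> Prop) : Prop :=
  C (fun x y => B x /\ B y).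

Definition proper_map (X Y : Type) (CX : rel X -> Prop) (CY : rel Y -> Prop)
  (f : X -> Y) : Prop :=
  forall B, bounded CY B -> bounded CX (fun x => B (f x)).

Definition coarsely_surjective (Z W : Type) (CW : rel W -> Prop) (g : Z -> W)
  : Prop :=
  exists E, CW E /\ forall w : W, exists z : Z, E (g z) w.

Record is_ultrafilter (I : Type) (U : (I -> Prop) -> Prop) : Prop := {
  uf_full  : U (fun _ => True);
  uf_proper : ~ U (fun _ => False);
  uf_up    : forall A B, U A -> (forall i, A i -> B i) -> U B;
  uf_inter : forall A B, U A -> U B -> U (fun i => A i /\ B i);
  uf_ult   : forall A, U A \/ U (fun i => ~ A i)
}.

(** Elements of *T are represented by functions I -> T, modulo ueq. *)
Definition ueq (I T : Type) (U : (I -> Prop) -> Prop) (a b : I -> T) : Prop :=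
  U (fun i => a i = b i).

Definition star_set (I T : Type) (U : (I -> Prop) -> Prop) (A : T -> Prop)
  (a : I -> T) : Prop := U (fun i => A (a i)).

Definition star_rel (I T : Type) (U : (I -> Prop) -> Prop) (F : rel T)
  (a b : I -> T) : Prop := U (fun i => F (a i) (b i)).

Definition star_map (I X Y : Type) (f : X -> Y) (a : I -> X) : I -> Y :=
  fun i => f (a i).

Definition INF (I X : Type) (U : (I -> Prop) -> Prop) (C : rel X -> Prop)
  (a : I -> X) : Prop :=
  forall B, bounded C B -> ~ star_set U B a.

(** A subset of (∂_S X)^2, given on representatives, must be invariant
    under ueq (i.e. be a genuine set of pairs of classes). *)
Definition ueq_invariant (I X : Type) (U : (I -> Prop) -> Prop)
  (E : rel (I -> X)) : Prop :=
  forall a a' b b', ueq U a a' -> ueq U b b' -> E a b -> E a' b'.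

Definition boundary_controlled (I X : Type) (U : (I -> Prop) -> Prop)
  (C : rel X -> Prop) (E : rel (I -> X)) : Prop :=
  ueq_invariant U E /\
  (forall a b, E a b -> INF U C a /\ INF U C b) /\
  exists F, C F /\ forall a b, E a b -> star_rel U F a b.

Definition star_coarsely_surjective (I X Y : Type) (U : (I -> Prop) -> Prop)
  (CX : rel X -> Prop) (CY : rel Y -> Prop) (f : X -> Y) : Prop :=
  exists E, boundary_controlled U CY E /\
    forall w : I -> Y,
      INF U CY w <-> exists z, INF U CX z /\ E (star_map f z) w.

(** Saturation: every family of internal subsets of *T, indexed by a set J
    of cardinality at most |K|, with the finite intersection property, has
    nonempty intersection.  (Internal subsets of *T are [A_i]_U with
    A : I -> (T -> Prop).) *)
Definition saturated_for (I : Type) (U : (I -> Prop) -> Prop) (K T : Type)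
  : Prop :=
  forall (J : Type) (A : J -> I -> T -> Prop),
    (exists h : J -> K, forall j j', h j = h j' -> j = j') ->
    (forall l : list J, exists a : I -> T,
        U (fun i => forall j, In j l -> A j i (a i))) ->
    exists a : I -> T, forall j, U (fun i => A j i (a i)).

(* Main.v *)
Require Import Defs.
From Stdlib Require Import List Classical.

Lemma U_nonempty (I : Type) (U : (I -> Prop) -> Prop) (P : I -> Prop) :
  is_ultrafilter U -> U P -> exists i, P i.
Proof.
  intros HU HP. apply NNPP; intro Hn.
  apply (uf_proper HU). apply (uf_up HU _ _ HP).
  intros i Hi. apply Hn. exists i. exact Hi.
Qed.

Lemma union_controlled (Y : Type) (CY : rel Y -> Prop) :
  is_coarse_structure CY -> forall l : list (rel Y),
  CY (fun a b => exists G, In G l /\ CY G /\ G a b).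
Proof.
  intros HC l. induction l as [|G l IH].
  - apply (cs_sub HC _ _ (cs_diag HC)). intros a b [G [[] _]].
  - destruct (classic (CY G)) as [HG|HG].
    + apply (cs_sub HC _ _ (cs_union HC _ _ HG IH)).
      intros a b [G' [[->|Hin] [HG' Hab]]]; [left; exact Hab|right; exists G'; auto].
    + apply (cs_sub HC _ _ IH).
      intros a b [G' [[->|Hin] [HG' Hab]]]; [contradiction|exists G'; auto].
Qed.

Theorem mainTheorem14 (I : Type) (U : (I -> Prop) -> Prop)
  (X Y : Type) (CX : rel X -> Prop) (CY : rel Y -> Prop) (f : X -> Y) :
  is_ultrafilter U ->
  saturated_for U ((X * X -> Prop) + (Y * Y -> Prop)) X ->
  saturated_for U ((X * X -> Prop) + (Y * Y -> Prop)) Y ->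
  is_coarse_structure CX -> is_coarse_structure CY ->
  inhabited X -> coarse_connected CY ->
  proper_map CX CY f ->
  star_coarsely_surjective U CX CY f ->
  coarsely_surjective CY f.
Proof.
  intros HU _ HsatY _ HC [x0] Hconn _ [E [[_ [_ [F [HF HEF]]]] HE]].
  apply NNPP; intro Hns.
  destruct (HsatY (rel Y) (fun G _ y => CY G -> ~ exists x, G (f x) y))
    as [w Hw].
  - exists (fun G => inr (fun p : Y * Y => G (fst p) (snd p))).
    intros G G' Heq. injection Heq as Heq.
    change G with (fun a b => (fun p : Y * Y => G (fst p) (snd p)) (a, b)).
    rewrite Heq. reflexivity.
  - intros l.
    set (Gu := fun a b => exists G, In G l /\ CY G /\ G a b).
    assert (HGu : CY Gu) by apply (@union_controlled Y CY HC l).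
    assert (Hy : exists y, ~ exists x, Gu (f x) y).
    { apply NNPP; intro H1. apply Hns. exists Gu. split; [exact HGu|].
      intro y. apply NNPP; intro H2. apply H1. exists y. exact H2. }
    destruct Hy as [y Hy]. exists (fun _ => y).
    apply (uf_up HU _ _ (uf_full HU)). intros i _ G Hin HG [x Hx].
    apply Hy. exists x. exists G. auto.
  - assert (Hinf : INF U CY w).
    { intros B HB HBw.
      destruct (@U_nonempty I U _ HU HBw) as [i0 Hi0].
      set (G := fun a b => a = f x0 /\ B b).
      assert (HG : CY G).
      { apply (cs_sub HC _ _ (cs_comp HC _ _ (Hconn (f x0) (w i0)) HB)).
        intros a b [-> Hb]. exists (w i0). auto. }
      destruct (@U_nonempty I U _ HU (uf_inter HU _ _ HBw (Hw G))) as [i [Hb Hn]].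
      apply (Hn HG). exists x0. split; auto. }
    destruct (proj1 (HE w) Hinf) as [z [_ Hz]].
    specialize (HEF _ _ Hz).
    destruct (@U_nonempty I U _ HU (uf_inter HU _ _ HEF (Hw F))) as [i [H1 H2]].
    apply (H2 HF). exists (z i). exact H1.
Qed.
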